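(* Let $\mathcal{H}$ be a real Hilbert space, $A:\mathcal{H}\rightrightarrows\mathcal{H}$ maximal monotone, $p\geq2$ an integer, and define $\varphi:[0,+\infty)\times\mathcal{H}\to[0,+\infty)$ by $\varphi(\lambda,x)=\lambda^{1/(p-1)}\|x-(I+\lambda A)^{-1}x\|$ for $\lambda>0$ and $\varphi(0,x)=0$. Fix $x\in\mathcal{H}$ with $0\notin Ax$. Then $\lambda\mapsto\varphi(\lambda,x)$ is continuous and strictly increasing on $[0,+\infty)$, $\varphi(0,x)=0$, and $\varphi(\lambda,x)\to+\infty$ as $\lambda\to+\infty$.
   Context: $(I+\lambda A)^{-1}$ is the resolvent of $A$ of index $\lambda>0$. *)

(* Defs.v *)
From HB Require Import structures.
From mathcomp Require Import all_boot all_order all_algebra.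
From mathcomp Require Import all_classical all_reals all_analysis.
Set Implicit Arguments. Unset Strict Implicit. Unset Printing Implicit Defensive.
Import Order.TTheory GRing.Theory Num.Theory.
Import numFieldNormedType.Exports.
Local Open Scope classical_set_scope.
Local Open Scope ring_scope.

(* A real Hilbert space is a complete normed space V whose norm comes from an
   inner product [inner]: symmetric, linear in the first argument, and
   |x|^2 = <x,x>. *)
Definition is_inner_product (R : realType) (V : normedModType R)
    (inner : V -> V -> R) : Prop :=
  [/\ forall x y, inner x y = inner y x,
      forall a x y z, inner (a *: x + y) z = a * inner x z + inner y z
    & forall x, `|x| ^+ 2 = inner x x].

Definition monotone_op (R : realType) (V : normedModType R)
    (inner : V -> V -> R) (A : V -> set V) : Prop :=
  forall x y u v, A x u -> A y v -> 0 <= inner (x - y) (u - v).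

Definition maximal_monotone (R : realType) (V : normedModType R)
    (inner : V -> V -> R) (A : V -> set V) : Prop :=
  monotone_op inner A /\
  forall B : V -> set V, monotone_op inner B ->
    (forall x u, A x u -> B x u) -> forall x u, B x u -> A x u.

(* Resolvent (I + lam A)^{-1} x: the (for maximal monotone A and lam > 0,
   unique and existing by Minty's theorem) y with x ∈ y + lam A y,
   i.e. lam^-1 (x - y) ∈ A y. *)
Definition resolvent (R : realType) (V : normedModType R)
    (A : V -> set V) (lam : R) (x : V) : V :=
  xget x [set y | A y (lam^-1 *: (x - y))].

Definition phi (R : realType) (V : normedModType R)
    (A : V -> set V) (p : nat) (lam : R) (x : V) : R :=
  if 0 < lam then powR lam ((p.-1)%:R^-1) * `|x - resolvent A lam x| else 0.

(* Main.v *)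
Require Import Defs.
From HB Require Import structures.
From mathcomp Require Import all_boot all_order all_algebra.
From mathcomp Require Import all_classical all_reals all_analysis.
From mathcomp Require Import ring lra.
Import Order.TTheory GRing.Theory Num.Theory.
Import numFieldNormedType.Exports.
Local Open Scope classical_set_scope.
Local Open Scope ring_scope.

Section Inner.
Context {R : realType} {V : normedModType R} {inner : V -> V -> R}.
Hypothesis H : is_inner_product inner.

Lemma inC x y : inner x y = inner y x.
Proof. by case: H. Qed.
Lemma inlin a x y z : inner (a *: x + y) z = a * inner x z + inner y z.
Proof. by case: H. Qed.
Lemma innn x : `|x| ^+ 2 = inner x x.
Proof. by case: H. Qed.
Lemma in0l z : inner 0 z = 0.
Proof. have := inlin 1 0 0 z; rewrite scaler0 addr0 mul1r => h; lra. Qed.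
Lemma inDl x y z : inner (x + y) z = inner x z + inner y z.
Proof. by rewrite -[x in LHS]scale1r inlin mul1r. Qed.
Lemma inZl a x z : inner (a *: x) z = a * inner x z.
Proof. by have := inlin a x 0 z; rewrite addr0 in0l addr0. Qed.
Lemma inNl x z : inner (- x) z = - inner x z.
Proof. by rewrite -scaleN1r inZl mulN1r. Qed.
Lemma inBl x y z : inner (x - y) z = inner x z - inner y z.
Proof. by rewrite inDl inNl. Qed.
Lemma inDr x y z : inner z (x + y) = inner z x + inner z y.
Proof. by rewrite inC inDl !(inC _ z). Qed.
Lemma inZr a x z : inner z (a *: x) = a * inner z x.
Proof. by rewrite inC inZl inC. Qed.
Lemma inNr x z : inner z (- x) = - inner z x.
Proof. by rewrite inC inNl inC. Qed.
Lemma inBr x y z : inner z (x - y) = inner z x - inner z y.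
Proof. by rewrite inDr inNr. Qed.
Lemma in0r z : inner z 0 = 0.
Proof. by rewrite inC in0l. Qed.
Definition inE := (inDl, inDr, inBl, inBr, inNl, inNr, inZl, inZr, in0l, in0r).

Lemma inCS x y : inner x y <= `|x| * `|y|.
Proof.
have [->|x0] := eqVneq x 0; first by rewrite in0l normr0 mul0r.
have [->|y0] := eqVneq y 0; first by rewrite in0r normr0 mulr0.
set a := `|x|; set b := `|y|.
have a0 : 0 < a by rewrite normr_gt0.
have b0 : 0 < b by rewrite normr_gt0.
have h := innn (b *: x - a *: y); rewrite !inE -!innn (inC y x) in h.
have h1 : 0 <= `|b *: x - a *: y| ^+ 2 by exact: sqr_ge0.
rewrite h in h1.
rewrite -/a -/b in h1.
have h2 : 0 <= a * b * (a * b - inner x y) by nra.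
have ab : 0 < a * b by exact: mulr_gt0.
nra.
Qed.
Lemma innn_ge0 x : 0 <= inner x x.
Proof. by rewrite -innn sqr_ge0. Qed.
End Inner.

Section Minty.
Variables (R : realType) (V : completeNormedModType R) (inner : V -> V -> R).
Hypothesis H : is_inner_product inner.
Variable P : V -> V -> Prop.
Hypothesis Pmono : forall a w b v, P a w -> P b v -> 0 <= inner (a - b) (w - v).
Hypothesis Pne : exists a w, P a w.

Local Notation E := (V * V * R)%type.
Let mix (s : R) (e1 e2 : E) : E :=
  ((1-s) *: e1.1.1 + s *: e2.1.1, (1-s) *: e1.1.2 + s *: e2.1.2, (1-s) * e1.2 + s * e2.2).
Let convexS (S : E -> Prop) := forall e1 e2 s, S e1 -> S e2 -> 0 <= s <= 1 -> S (mix s e1 e2).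
Let eg a w : E := (a, w, inner a w).
Let C (e : E) := forall S, convexS S -> (forall a w, P a w -> S (eg a w)) -> S e.
Let cross (e1 e2 : E) := e1.2 + e2.2 - inner e1.1.1 e2.1.2 - inner e2.1.1 e1.1.2.
Let dd (e : E) := e.1.2 - e.1.1.
Let psi (e : E) := - inner (dd e) (dd e) / 4 - e.2.

Let C_convex : convexS C.
Proof. by move=> e1 e2 s h1 h2 hs S cS gS; apply: (cS e1 e2 s); [exact: h1|exact: h2|exact: hs]. Qed.

Let C_eg a w : P a w -> C (eg a w).
Proof. by move=> h S _ gS; apply: gS. Qed.

Let cross_mixl s e1 e2 e : cross (mix s e1 e2) e = (1 - s) * cross e1 e + s * cross e2 e.
Proof. rewrite /cross /= !(inE H); ring. Qed.

Let crossC e1 e2 : cross e1 e2 = cross e2 e1.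
Proof. rewrite /cross; ring. Qed.

Let cross_conv e1 e2 e s : 0 <= cross e1 e -> 0 <= cross e2 e -> 0 <= s <= 1 ->
  0 <= cross (mix s e1 e2) e.
Proof.
move=> h1 h2 /andP[s0 s1]; rewrite cross_mixl.
by apply: addr_ge0; apply: mulr_ge0 => //; rewrite subr_ge0.
Qed.

Let C_cross e1 e2 : C e1 -> C e2 -> 0 <= cross e1 e2.
Proof.
have S1 : forall e, C e -> forall a w, P a w -> 0 <= cross e (eg a w).
  move=> e he; apply: (he (fun e => forall a w, P a w -> 0 <= cross e (eg a w))).
    by move=> x y s hx hy hs a w h; apply: cross_conv => //; [apply: hx|apply: hy].
  move=> b v hbv a w haw; rewrite /cross /=.
  have := Pmono _ _ _ _ hbv haw; rewrite !(inE H) (inC H a v) (inC H b w); lra.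
move=> h1 h2; move: e1 h1 e2 h2.
suff : forall e, C e -> forall e', C e' -> 0 <= cross e e' by [].
move=> e he; apply: (he (fun e => forall e', C e' -> 0 <= cross e e')).
  by move=> x y s hx hy hs e' he'; apply: cross_conv => //; [apply: hx|apply: hy].
by move=> a w haw e' he'; rewrite crossC; apply: S1.
Qed.

Let psi_le0 e : C e -> psi e <= 0.
Proof.
move=> he; have := C_cross _ _ he he; rewrite /cross /psi /dd.
have := innn_ge0 H (e.1.1 + e.1.2).
rewrite !(inE H) (inC H e.1.2 e.1.1); lra.
Qed.

Let psi_mix s e1 e2 : psi (mix s e1 e2) =
  (1 - s) * psi e1 + s * psi e2 + s * (1 - s) * inner (dd e1 - dd e2) (dd e1 - dd e2) / 4.
Proof.
have hd : dd (mix s e1 e2) = (1 - s) *: dd e1 + s *: dd e2.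
  by rewrite /dd /= !scalerBr opprD addrACA.
rewrite /psi hd; move: (dd e1) (dd e2) => u v; rewrite !(inE H) (inC H v u) /=; ring.
Qed.

Lemma minty_core : exists y, forall a w, P a w -> inner (y - a) (y + w) <= 0.
Proof.
pose Ps := [set psi e | e in C].
have Pne' : Ps !=set0.
  by case: Pne => a [w h]; exists (psi (eg a w)); exists (eg a w) => //; apply: C_eg.
have Pub : ubound Ps 0 by move=> _ [e he <-]; apply: psi_le0.
have hs : has_sup Ps by split => //; exists 0.
pose M := sup Ps.
have M0 : M <= 0 by apply: ge_sup.
have Mub : forall e, C e -> psi e <= M.
  by move=> e he; apply: (sup_upper_bound hs); exists e.
have : forall n : nat, exists e, C e /\ M - harmonic n < psi e.
  move=> n; have [_ [e he <-] h] := sup_adherent (harmonic_gt0 n) hs.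
  by exists e.
move=> /choice [en hen].
pose d n := dd (en n).
have key : forall m n, inner (d m - d n) (d m - d n) < 8 * (harmonic m + harmonic n).
  move=> m n; have [hm1 hm2] := hen m; have [hn1 hn2] := hen n.
  have := Mub _ (C_convex _ _ (2^-1) hm1 hn1 _).
  rewrite psi_mix => h; have {h} := h ltac:(apply/andP; split; lra).
  rewrite /d; lra.
have hc : cvg (d @ \oo).
  apply: cauchy_cvg; apply: cauchy_exP => e e0.
  have e2 : 0 < e ^+ 2 / 16 by apply: divr_gt0 => //; apply: exprn_gt0.
  have := @cvg_harmonic R; move=> /cvgr_dist_lt /(_ _ e2) [N _ hN].
  exists (d N); exists N => // n /= hn.
  rewrite -ball_normE /ball_ /=.
  have := key N n; rewrite -(innn H).
  have := hN N (leqnn N); have := hN n hn.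
  rewrite !sub0r !normrN !ger0_norm ?harmonic_ge0 // => h1 h2 h3.
  have := normr_ge0 (d N - d n); nra.
move/cvg_ex: hc => [ds hds].
exists (- (2^-1) *: ds) => a w haw.
have he := C_eg _ _ haw.
have claim : forall s, 0 < s < 1 ->
    psi (eg a w) + (1 - s) * `|ds - dd (eg a w)| ^+ 2 / 4 <= 0.
  move=> s /andP[s0 s1].
  have : psi (eg a w) + (1 - s) * `|d n - dd (eg a w)| ^+ 2 / 4 @[n --> \oo] -->
         psi (eg a w) + (1 - s) * `|ds - dd (eg a w)| ^+ 2 / 4.
    apply: cvgD; first exact: cvg_cst.
    apply: cvgM; last exact: cvg_cst.
    apply: cvgM; first exact: cvg_cst.
    rewrite expr2; under eq_cvg do rewrite expr2.
    have hn : `|d n - dd (eg a w)| @[n --> \oo] --> `|ds - dd (eg a w)|.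
      by apply: cvg_norm; apply: cvgB => //; exact: cvg_cst.
    exact: cvgM.
  move=> hf.
  have hg : harmonic n / s @[n --> \oo] --> (0 : R).
    rewrite -(mul0r s^-1); apply: cvgM; [exact: cvg_harmonic | exact: cvg_cst].
  apply: (ler_cvg_to hf hg); apply: nearW => n.
  have [hn1 hn2] := hen n.
  have := Mub _ (C_convex _ _ s hn1 he ltac:(apply/andP; split; lra)).
  rewrite psi_mix -(innn H) => h.
  rewrite ler_pdivlMr //.
  have h3 : (1 - s) * (M - harmonic n) <= (1 - s) * psi (en n).
    by rewrite ler_wpM2l ?subr_ge0 ?ltW.
  have h4 : s * M <= 0 by rewrite pmulr_rle0.
  have h5 : 0 <= s * harmonic n by rewrite mulr_ge0 ?ltW ?harmonic_gt0.
  rewrite -/(d n) in h. nra.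
set q := `|ds - dd (eg a w)| ^+ 2 / 4.
have q0 : 0 <= q by rewrite /q divr_ge0 ?sqr_ge0.
have c0 : psi (eg a w) + q <= 0.
  rewrite leNgt; apply/negP => cpos.
  set c := psi (eg a w) + q in cpos.
  have cq : 0 < c + q by lra.
  have s0 : 0 < c / (2 * (c + q)) by rewrite divr_gt0 // mulr_gt0.
  have s1 : c / (2 * (c + q)) < 1 by rewrite ltr_pdivrMr ?mulr_gt0 //; lra.
  have := claim _ (introT andP (conj s0 s1)); rewrite -mulrA -/q => h.
  have : c / (2 * (c + q)) * q < c.
    rewrite mulrAC ltr_pdivrMr ?mulr_gt0 //; nra.
  rewrite /c in h *; nra.
move: c0; rewrite /q (innn H) /psi /dd /=.
rewrite !(inE H) (inC H a ds) (inC H w ds) (inC H a w) (inC H w a) (inC H ds w) (inC H ds a).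
lra.
Qed.
End Minty.

Section Main.
Context {R : realType} {V : completeNormedModType R} {inner : V -> V -> R}.
Hypothesis H : is_inner_product inner.
Variable A : V -> set V.
Hypothesis Hmax : maximal_monotone inner A.

Lemma A_ne : exists a u, A a u.
Proof.
apply/not_existsP => hA.
have := Hmax.2 (fun y v => y = 0 /\ v = 0).
have mB : monotone_op inner (fun y v => y = 0 /\ v = 0).
  by move=> ? ? ? ? [-> ->] [-> ->]; rewrite subr0 (in0l H).
move=> /(_ mB) h.
have : A 0 0.
  apply: h => //.
  by move=> a u hau; exfalso; apply: (hA a); exists u.
by move=> h0; apply: (hA 0); exists 0.
Qed.

Lemma res_exists (x : V) (lam : R) : 0 < lam ->
  exists y, A y (lam^-1 *: (x - y)).
Proof.
move=> l0.
pose P a w := A (a + x) (lam^-1 *: w).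
have Pmono : forall a w b v, P a w -> P b v -> 0 <= inner (a - b) (w - v).
  move=> a w b v h1 h2; have := Hmax.1 _ _ _ _ h1 h2.
  rewrite opprD addrACA subrr addr0 -scalerBr (inZr H) pmulr_rge0 //.
  by rewrite invr_gt0.
have Pne : exists a w, P a w.
  have [a [u h]] := A_ne; exists (a - x), (lam *: u).
  by rewrite /P subrK scalerA mulVf ?gt_eqF // scale1r.
have [y' hy'] := @minty_core _ _ _ H P Pmono Pne.
exists (y' + x).
set v0 := lam^-1 *: (x - (y' + x)).
pose B z v := A z v \/ (z = y' + x /\ v = v0).
have key : forall z u, A z u -> 0 <= inner (z - (y' + x)) (u - v0).
  move=> z u hzu.
  have hP : P (z - x) (lam *: u).
    by rewrite /P subrK scalerA mulVf ?gt_eqF // scale1r.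
  have := hy' _ _ hP.
  have -> : u - v0 = lam^-1 *: (y' + lam *: u).
    have hv0 : v0 = - (lam^-1 *: y') by rewrite /v0 opprD addrCA subrr addr0 scalerN.
    by rewrite hv0 scalerDr scalerA mulVf ?gt_eqF // scale1r opprK addrC.
  have -> : y' - (z - x) = - (z - (y' + x)).
    by rewrite !opprB addrA.
  rewrite (inZr H) (inNl H) => h.
  by rewrite pmulr_rge0 ?invr_gt0 // -oppr_le0.
have mB : monotone_op inner B.
  move=> z1 z2 u1 u2 [h1|[-> ->]] [h2|[-> ->]].
  - exact: Hmax.1 _ _ _ _ h1 h2.
  - exact: key.
  - have := key _ _ h2.
    by rewrite -(opprB z2) -(opprB u2) (inNl H) (inNr H) opprK.
  - by rewrite subrr (in0l H).
have := Hmax.2 B mB (fun z u h => or_introl h) (y' + x) v0 (or_intror (conj erefl erefl)).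
by [].
Qed.

Variable x : V.
Hypothesis hx : ~ A x 0.
Let J lam := resolvent A lam x.
Let r lam := x - J lam.

Lemma J_spec lam : 0 < lam -> A (J lam) (lam^-1 *: r lam).
Proof. move=> l0; rewrite /r /J /resolvent. set P := [set y | _]. apply: (@xgetPex _ x P). exact: res_exists. Qed.

Lemma r_neq0 lam : 0 < lam -> r lam != 0.
Proof.
move=> l0; apply/negP => /eqP h; apply: hx.
have := J_spec _ l0; rewrite h scaler0.
by move/eqP: h; rewrite subr_eq0 => /eqP <-.
Qed.

Lemma F1 l m : 0 < l -> 0 < m -> 0 <= inner (r m - r l) (m *: r l - l *: r m).
Proof.
move=> l0 m0; have := Hmax.1 _ _ _ _ (J_spec _ l0) (J_spec _ m0).
have -> : J l - J m = r m - r l by apply/esym; rewrite /r opprB addrC addrA subrK.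
move: (r l) (r m) => a b.
have -> : m *: a - l *: b = (l * m) *: (l^-1 *: a - m^-1 *: b).
  rewrite scalerBr !scalerA; congr (_ *: _ - _ *: _).
    by rewrite mulrC mulrA mulVf ?gt_eqF // mul1r.
  by rewrite -mulrA mulfV ?gt_eqF // mulr1.
by rewrite (inZr H) pmulr_rge0 // mulr_gt0.
Qed.

Lemma F2 l m : 0 < l -> 0 < m ->
  0 <= (l + m) * (`|r l| * `|r m|) - l * `|r m| ^+ 2 - m * `|r l| ^+ 2.
Proof.
move=> l0 m0; have := F1 _ _ l0 m0; have := inCS H (r l) (r m).
move: (r l) (r m) => a b.
rewrite !(inE H) (inC H b a) !(innn H); nra.
Qed.

Lemma r_mono l m : 0 < l -> l <= m -> `|r l| <= `|r m| /\ l * `|r m| <= m * `|r l|.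
Proof.
move=> l0 lm; have m0 : 0 < m by apply: lt_le_trans lm.
have := F2 _ _ l0 m0; have := normr_ge0 (r l); have := normr_ge0 (r m).
move: `|r l| `|r m| => al bm h1 h2 h3; split.
  rewrite leNgt; apply/negP => hlt.
  have h4 : 0 < m * al - l * bm by nra.
  nra.
rewrite leNgt; apply/negP => hlt.
have h4 : al < bm by nra.
nra.
Qed.

Lemma r_dist l m : 0 < l -> 0 < m -> l * `|r m - r l| <= `|m - l| * `|r l|.
Proof.
move=> l0 m0; have := F1 _ _ l0 m0.
have hdist : `|r m - r l| = `|r m - r l| by [].
move: (r l) (r m) => a b.
have -> : m *: a - l *: b = l *: (a - b) + (m - l) *: a.
  by apply/esym; rewrite scalerBr scalerBl addrC -addrA addKr.
have := inCS H (b - a) a; have := inCS H (- (b - a)) a.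
rewrite normrN.
have hab : a - b = - (b - a) by rewrite opprB.
rewrite hab.
move: (b - a) => d.
rewrite !(inE H) -(innn H) => h1 h2 h3.
have hd := normr_ge0 d; have ha := normr_ge0 a.
have key : l * `|d| ^+ 2 <= `|m - l| * `|d| * `|a|.
  have [ml|ml] := leP 0 (m - l).
    rewrite ger0_norm //; nra.
  rewrite ltr0_norm //; nra.
have [d0|dpos] := eqVneq `|d| 0.
  by rewrite d0 mulr0 mulr_ge0.
have dp : 0 < `|d| by rewrite lt_neqAle eq_sym dpos hd.
rewrite -(ler_pM2r dp); nra.
Qed.

Variable p : nat.
Hypothesis hp : (2 <= p)%N.
Let k : R := (p.-1)%:R^-1.
Let k0 : 0 < k.
Proof. by rewrite /k invr_gt0 ltr0n; case: p hp => [|[|q]]. Qed.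

Let f := fun lam : R => phi A p lam x.

Let f_pos l : 0 < l -> f l = powR l k * `|r l|.
Proof. by move=> l0; rewrite /f /phi l0. Qed.

Let rpos l : 0 < l -> 0 < `|r l|.
Proof. by move=> l0; rewrite normr_gt0 r_neq0. Qed.

Lemma f_strict a b : 0 <= a -> a < b -> f a < f b.
Proof.
move=> a0 ab; have b0 : 0 < b by apply: le_lt_trans ab.
rewrite (f_pos _ b0).
have [a00|apos] := eqVneq a 0.
  by rewrite a00 /f /phi ltxx mulr_gt0 ?powR_gt0 ?rpos.
have a1 : 0 < a by rewrite lt_neqAle eq_sym apos a0.
rewrite (f_pos _ a1).
have h1 : powR a k < powR b k.
  by apply: gt0_ltr_powR => //; rewrite nnegrE ?ltW.
have [h2 _] := r_mono _ _ a1 (ltW ab).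
apply: (@lt_le_trans _ _ (powR b k * `|r a|)).
  by rewrite ltr_pM2r ?rpos.
by rewrite ler_pM2l ?powR_gt0.
Qed.

Lemma f_0 : f 0 = 0.
Proof. by rewrite /f /phi ltxx. Qed.

Lemma f_infty : f lam @[lam --> +oo] --> +oo.
Proof.
apply/cvgryPge => M.
set c := `|r 1|.
have c0 : 0 < c by apply: rpos.
set t := Num.max 1 (M / c).
have t1 : 1 <= t by rewrite /t le_max lexx.
have t0 : 0 < t by apply: lt_le_trans t1.
have hN : powR (t ^+ p.-1) k = t.
  rewrite -powR_mulrn ?ltW // -powRrM /k mulfV ?powRr1 ?ltW //.
  by rewrite pnatr_eq0; case: p hp => [|[|q]].
near=> lam.
have l1 : 1 <= lam by near: lam; apply: nbhs_pinfty_ge.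
have lN : t ^+ p.-1 <= lam by near: lam; apply: nbhs_pinfty_ge; apply: num_real.
have l0 : 0 < lam by apply: lt_le_trans l1.
rewrite (f_pos _ l0).
have [h1 _] := r_mono _ _ ltr01 l1.
have h2 : t <= powR lam k.
  rewrite -{1}hN; apply: ge0_ler_powR => //; first exact: ltW.
    by rewrite nnegrE exprn_ge0 // ltW.
  by rewrite nnegrE ltW.
have h3 : M <= t * c.
  by rewrite -ler_pdivrMr // /t le_max lexx orbT.
apply: (le_trans h3); apply: (le_trans (ler_wpM2r (ltW c0) h2)).
by rewrite ler_wpM2l ?powR_ge0.
Unshelve. all: by end_near. Qed.

Lemma f_cont : {within `[0, +oo[, continuous f}.
Proof.
apply/continuous_within_itvcyP; split.
  move=> l; rewrite in_itv /= andbT => l0.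
  pose g y := powR y k * `|r y|.
  have hr : `|r y| @[y --> l] --> `|r l|.
    apply/cvgrPdist_lt => e e0.
    have el : 0 < e * l / (`|r l| + 1) by rewrite divr_gt0 ?mulr_gt0 // ltr_wpDl.
    near=> y.
    have y0 : 0 < y by near: y; apply: lt_nbhsr.
    have hy : `|l - y| < e * l / (`|r l| + 1).
      by near: y; apply: cvgr_dist_lt => //; exact: cvg_id.
    have hd := r_dist _ _ l0 y0.
    have h1 : `| `|r l| - `|r y| | <= `|r y - r l| by rewrite distrC ler_dist_dist.
    rewrite ltr_pdivlMr ?ltr_wpDl // in hy.
    rewrite distrC in hy.
    have := normr_ge0 (r l); have := normr_ge0 (y - l); have := normr_ge0 (r y - r l).
    nra.
  have hp' : powR y k @[y --> l] --> powR l k.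
    have h : derivable (fun y : R => powR y k) l 1.
      by apply: derivable_powR; rewrite in_itv /= andbT l0.
    have := differentiable_continuous (proj1 (derivable1_diffP _ _) h).
    by [].
  have hg : g y @[y --> l] --> g l by apply: cvgM.
  rewrite /continuous_at (f_pos _ l0) -/(g l).
  apply: cvg_trans hg; apply: near_eq_cvg.
  near=> y; rewrite /g f_pos //.
  by near: y; apply: lt_nbhsr.
rewrite f_0.
have hu : powR y k * `|r 1| @[y --> 0^'+] --> (0 : R).
  have := cvgM (powR_cvg0 k0) (cvg_cst `|r 1|); rewrite mul0r; exact.
apply: (squeeze_cvgr _ (cvg_cst 0) hu).
near=> y.
have y0 : 0 < y by near: y; apply: nbhs_right_gt.
have y1 : y <= 1 by near: y; apply: nbhs_right_le; exact: ltr01.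
rewrite (f_pos _ y0); have [h1 _] := r_mono _ _ y0 y1.
apply/andP; split; first by rewrite mulr_ge0 ?powR_ge0.
by rewrite ler_wpM2l ?powR_ge0.
Unshelve. all: by end_near. Qed.

End Main.

Theorem proposition2p1 (R : realType) (V : completeNormedModType R)
    (inner : V -> V -> R) (A : V -> set V) (p : nat) (x : V) :
  is_inner_product inner ->
  maximal_monotone inner A ->
  (2 <= p)%N ->
  ~ A x 0 ->
  [/\ {within `[0, +oo[, continuous (fun lam : R => phi A p lam x)},
      (forall a b : R, 0 <= a -> a < b -> phi A p a x < phi A p b x),
      phi A p 0 x = 0
    & phi A p lam x @[lam --> +oo] --> +oo].
Proof.
move=> hH hmax hp hx; split.
- exact: (f_cont hH A hmax x p hp).
- exact: (f_strict hH A hmax x hx p hp).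
- exact: (f_0 A x p).
- exact: (f_infty hH A hmax x hx p hp).
Qed.
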